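(* Assume $g$ satisfies (Hg) and (Hg1), and let $k>0$. Let $(a,d)\in\overline{\mathcal D^-(k)}\cap\mathcal H$ and $\underline a\in(0,a)$. Then $(\underline a,d)\in\mathcal D^-(k)$.
   Context: Let $\mathcal H=(0,1)\times(0,\infty)$. A function $g:\mathbb R\times[0,1]\to\mathbb R$, $(u,a)\mapsto g(u;a)$, satisfies (Hg) if it is $C^1$ and for every $a\in(0,1)$: $g(0;a)=g(a;a)=g(1;a)=0$, $g'(0;a)<0$, $g'(1;a)<0$, $g'(a;a)>0$ (where $g'=\partial_u g$), $g(v;a)>0$ for $v\in(-\infty,0)\cup(a,1)$ and $g(v;a)<0$ for $v\in(0,a)\cup(1,\infty)$. (Hg1): $\partial_a g(v;a)<0$ for all $a,v\in(0,1)$. For $A\in(0,1)$ let $d^\diamond(A;a)=\inf\{d>0:\ d(k+1)(A-v)-g(A;a)\ge -g(v;a)\ \text{for all }v\in[0,A]\}$ and $\mathcal D^-(k)=\{(a,d)\in\mathcal H:\ d^\diamond(A;a)<d<g(A;a)/A$ for some $A\in(a,1)\}$; the closure is taken in $\mathbb R^2$. *)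

(* Defs.v *)
From Stdlib Require Import Reals.
From Coquelicot Require Import Coquelicot.
Open Scope R_scope.

Definition cont_in_strip (f : R -> R -> R) (u a : R) : Prop :=
  forall eps, 0 < eps -> exists delta, 0 < delta /\
    forall u' a', 0 <= a' <= 1 -> Rabs (u' - u) < delta -> Rabs (a' - a) < delta ->
      Rabs (f u' a' - f u a) < eps.

Definition C1_strip (g : R -> R -> R) : Prop :=
  (forall u a, 0 <= a <= 1 -> cont_in_strip g u a) /\
  exists gu ga : R -> R -> R,
    (forall u a, 0 <= a <= 1 -> cont_in_strip gu u a /\ cont_in_strip ga u a) /\
    (forall u a, 0 <= a <= 1 -> is_derive (fun v => g v a) u (gu u a)) /\
    (forall u a, 0 < a < 1 -> is_derive (fun b => g u b) a (ga u a)).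

Definition dgu (g : R -> R -> R) (u a : R) : R := Derive (fun v => g v a) u.
Definition dga (g : R -> R -> R) (v a : R) : R := Derive (fun b => g v b) a.

Definition Hg (g : R -> R -> R) : Prop :=
  C1_strip g /\
  forall a, 0 < a < 1 ->
    g 0 a = 0 /\ g a a = 0 /\ g 1 a = 0 /\
    dgu g 0 a < 0 /\ dgu g 1 a < 0 /\ 0 < dgu g a a /\
    (forall v, (v < 0 \/ (a < v < 1)) -> 0 < g v a) /\
    (forall v, ((0 < v < a) \/ 1 < v) -> g v a < 0).

Definition Hg1 (g : R -> R -> R) : Prop :=
  forall a v, 0 < a < 1 -> 0 < v < 1 -> dga g v a < 0.

(* d^diamond(A;a) = inf { d > 0 | forall v in [0,A], d(k+1)(A-v) - g(A;a) >= -g(v;a) },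
   as an extended real (inf of the empty set = +oo). *)
Definition d_diamond (g : R -> R -> R) (k A a : R) : Rbar :=
  Glb_Rbar (fun d => 0 < d /\
    forall v, 0 <= v <= A -> d * (k + 1) * (A - v) - g A a >= - g v a).

Definition in_H (a d : R) : Prop := 0 < a < 1 /\ 0 < d.

Definition D_minus (g : R -> R -> R) (k : R) (a d : R) : Prop :=
  in_H a d /\
  exists A, a < A < 1 /\ Rbar_lt (d_diamond g k A a) (Finite d) /\ d < g A a / A.

Definition in_closure (S : R -> R -> Prop) (a d : R) : Prop :=
  forall eps, 0 < eps -> exists a' d', S a' d' /\ Rabs (a' - a) < eps /\ Rabs (d' - d) < eps.

(* Main.v *)
Require Import Defs.
From Stdlib Require Import Reals.
From Coquelicot Require Import Coquelicot.
From Stdlib Require Import Rtopology ClassicalEpsilon Lra Psatz.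
Open Scope R_scope.

Lemma cont_eps (f : R -> R) z : continuity_pt f z ->
  forall eps, 0 < eps -> exists del, 0 < del /\ forall t, Rabs (t - z) < del -> Rabs (f t - f z) < eps.
Proof.
  intros Hc eps He. destruct (Hc eps He) as [al [Hal H]].
  exists al; split; [lra|]. intros t Ht.
  destruct (Req_dec t z) as [->|Hne].
  - rewrite Rminus_eq_0, Rabs_R0; lra.
  - apply (H t). split; [split; [exact I| auto] | exact Ht].
Qed.

Lemma eps_cont (f : R -> R) z :
  (forall eps, 0 < eps -> exists del, 0 < del /\ forall t, Rabs (t - z) < del -> Rabs (f t - f z) < eps)
  -> continuity_pt f z.
Proof.
  intros H eps He. destruct (H eps He) as [d [Hd Hd']].
  exists d; split; [lra|]. intros t [_ Ht]. apply Hd'. exact Ht.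
Qed.

Lemma first_zero (f : R -> R) x y : x < y ->
  (forall z, x <= z <= y -> continuity_pt f z) -> 0 < f x -> f y < 0 ->
  exists z, x < z < y /\ f z = 0 /\ forall w, x <= w < z -> 0 < f w.
Proof.
  intros Hxy Hc Hfx Hfy.
  set (E := fun t => x <= t <= y /\ forall w, x <= w <= t -> 0 < f w).
  assert (Hb : bound E) by (exists y; intros t [Ht _]; lra).
  assert (Hex : exists t, E t) by (exists x; split; [lra| intros w Hw; replace w with x by lra; exact Hfx]).
  destruct (completeness E Hb Hex) as [z [Hub Hlub]].
  assert (Hxz : x <= z) by (apply Hub; destruct Hex as [t Ht]; split; [lra| intros w Hw; replace w with x by lra; exact Hfx]).
  assert (Hzy : z <= y) by (apply Hlub; intros t [Ht _]; lra).
  assert (Hii : forall w, x <= w < z -> 0 < f w).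
  { intros w Hw. destruct (Rlt_le_dec 0 (f w)) as [h|h]; [exact h|].
    exfalso. assert (z <= w); [|lra]. apply Hlub. intros t [Ht Ht'].
    destruct (Rle_lt_dec t w) as [h'|h']; [exact h'|]. specialize (Ht' w). lra. }
  assert (Hfz : f z = 0).
  { destruct (Rtotal_order (f z) 0) as [Hn|[He|Hp]]; [|exact He|].
    - exfalso. assert (Hxz' : x < z) by (destruct (Req_dec x z) as [<-|]; lra).
      destruct (cont_eps f z (Hc z ltac:(lra)) (- f z) ltac:(lra)) as [de [Hde H]].
      set (w := Rmax x (z - de/2)).
      assert (Hw1 : x <= w) by apply Rmax_l.
      assert (Hw2 : w < z) by (unfold w; apply Rmax_lub_lt; lra).
      assert (Hw3 : Rabs (w - z) < de).
      { rewrite Rabs_left by lra. unfold w. assert (z - de/2 <= Rmax x (z - de/2)) by apply Rmax_r. lra. }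
      specialize (H w Hw3). specialize (Hii w (conj Hw1 Hw2)).
      apply Rabs_def2 in H. lra.
    - exfalso. assert (Hzy' : z < y) by (destruct (Req_dec z y) as [->|]; lra).
      destruct (cont_eps f z (Hc z ltac:(lra)) (f z) ltac:(lra)) as [de [Hde H]].
      set (t := Rmin y (z + de/2)).
      assert (Ht1 : z < t) by (unfold t; apply Rmin_glb_lt; lra).
      assert (Ht2 : t <= y) by apply Rmin_l.
      assert (Ht3 : t <= z + de/2) by apply Rmin_r.
      assert (E t).
      { split; [lra|]. intros w Hw. destruct (Rlt_le_dec w z) as [h|h].
        - apply Hii; lra.
        - assert (Rabs (w - z) < de) by (rewrite Rabs_right; lra).
          specialize (H w H0). apply Rabs_def2 in H. lra. }
      specialize (Hub t H0). lra. }
  exists z. split; [|split; auto].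
  split.
  - destruct (Req_dec x z) as [<-|]; lra.
  - destruct (Req_dec z y) as [->|]; lra.
Qed.

Lemma glb_lt (E : R -> Prop) x : Rbar_lt (Glb_Rbar E) (Finite x) -> exists y, E y /\ y < x.
Proof.
  intros H. destruct (Classical_Prop.classic (exists y, E y /\ y < x)) as [h|h]; [exact h|].
  exfalso. destruct (Glb_Rbar_correct E) as [_ Hg].
  assert (Hl : is_lb_Rbar E (Finite x)).
  { intros y Hy. simpl. destruct (Rle_lt_dec x y) as [h1|h1]; [exact h1|]. exfalso; apply h; eauto. }
  specialize (Hg _ Hl). apply (Rbar_lt_not_le _ _ H Hg).
Qed.

Lemma glb_le (E : R -> Prop) x : E x -> Rbar_le (Glb_Rbar E) (Finite x).
Proof. intros H. destruct (Glb_Rbar_correct E) as [Hl _]. apply Hl, H. Qed.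

Lemma contv g b z : Hg g -> 0 <= b <= 1 -> continuity_pt (fun v => g v b) z.
Proof.
  intros [[Hc _] _] Hb. apply eps_cont. intros eps He.
  destruct (Hc z b Hb eps He) as [d [Hd H]]. exists d; split; auto.
  intros t Ht. apply H; auto. rewrite Rminus_eq_0, Rabs_R0; lra.
Qed.

Lemma mono_strict g v b1 b2 : Hg g -> Hg1 g -> 0 < b1 < b2 -> b2 < 1 -> 0 < v < 1 -> g v b2 < g v b1.
Proof.
  intros HG H1 Hb Hb2 Hv.
  destruct HG as [[_ [gu [ga [_ [_ Hda]]]]] _].
  destruct (MVT_cor2 (fun b => g v b) (ga v) b1 b2) as [c [Hc Hc']]; [lra| |].
  - intros c Hc. apply is_derive_Reals. apply Hda. lra.
  - assert (Hneg : ga v c < 0).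
    { rewrite <- (is_derive_unique (fun b => g v b) c (ga v c)) by (apply Hda; lra).
      apply H1; lra. }
    assert (ga v c * (b2 - b1) < 0) by (apply Rmult_neg_pos; lra). lra.
Qed.

Lemma mono g v b1 b2 : Hg g -> Hg1 g -> 0 < b1 < b2 -> b2 < 1 -> 0 <= v <= 1 -> g v b2 <= g v b1.
Proof.
  intros HG H1 Hb Hb2 Hv.
  destruct (Req_dec v 0) as [->|H0].
  - destruct HG as [_ HH]. rewrite (proj1 (HH b1 ltac:(lra))), (proj1 (HH b2 ltac:(lra))). lra.
  - destruct (Req_dec v 1) as [->|H2].
    + destruct HG as [_ HH]. destruct (HH b1 ltac:(lra)) as [_ [_ [E1 _]]].
      destruct (HH b2 ltac:(lra)) as [_ [_ [E2 _]]]. lra.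
    + left. apply mono_strict; auto; lra.
Qed.

Definition W (g : R -> R -> R) k a' d' A' :=
  forall v, 0 <= v <= A' -> d' * (k + 1) * (A' - v) - g A' a' >= - g v a'.

Lemma approx g k a d : 0 < k -> in_closure (D_minus g k) a d ->
  exists l, 0 <= l <= 1 /\ forall del, 0 < del -> exists a' d' A',
    Rabs (a' - a) < del /\ Rabs (d' - d) < del /\ Rabs (A' - l) < del /\
    0 < a' < 1 /\ a' < A' < 1 /\ d' * A' < g A' a' /\ W g k a' d' A'.
Proof.
  intros Hk Hcl.
  set (Q := fun (n : nat) (p : R * R * R) =>
    Rabs (fst (fst p) - a) < / (INR n + 1) /\ Rabs (snd (fst p) - d) < / (INR n + 1) /\
    0 < fst (fst p) < 1 /\ fst (fst p) < snd p < 1 /\ snd (fst p) * snd p < g (snd p) (fst (fst p)) /\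
    W g k (fst (fst p)) (snd (fst p)) (snd p)).
  assert (Hn : forall n, exists p, Q n p).
  { intros n. assert (Hp : 0 < / (INR n + 1)).
    { apply Rinv_0_lt_compat. pose proof (pos_INR n). lra. }
    destruct (Hcl _ Hp) as [a' [d' [[[Ha' Hd'] [A' [HA' [Hlt Hup]]]] [E1 E2]]]].
    destruct (glb_lt _ _ Hlt) as [dd [[Hdd Hw] Hdd']].
    exists (a', d', A'). unfold Q; simpl. repeat split; try lra.
    - apply Rlt_div_r in Hup; lra.
    - intros v Hv. specialize (Hw v Hv).
      assert (dd * (k + 1) * (A' - v) <= d' * (k + 1) * (A' - v)).
      { apply Rmult_le_compat_r; [lra|]. apply Rmult_le_compat_r; lra. }
      lra. }
  set (s := fun n => proj1_sig (constructive_indefinite_description _ (Hn n))).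
  assert (Hs : forall n, Q n (s n)) by (intros n; unfold s; apply proj2_sig).
  destruct (Bolzano_Weierstrass (fun n => snd (s n)) (fun c => 0 <= c <= 1) (compact_P3 0 1)) as [l Hl].
  { intros n. destruct (Hs n) as [_ [_ [H1 [H2 _]]]]. lra. }
  exists l. split.
  - destruct (Rle_lt_dec 0 l) as [h|h]; destruct (Rle_lt_dec l 1) as [h'|h']; try (split; lra).
    + exfalso. assert (Hp : 0 < l - 1) by lra.
      destruct (Hl (fun t => Rabs (t - l) < l - 1) 0%nat) as [p [_ Hp']].
      { exists (mkposreal _ Hp). intros t Ht. exact Ht. }
      destruct (Hs p) as [_ [_ [H1 [H2 _]]]]. apply Rabs_def2 in Hp'. lra.
    + exfalso. assert (Hp : 0 < - l) by lra.
      destruct (Hl (fun t => Rabs (t - l) < - l) 0%nat) as [p [_ Hp']].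
      { exists (mkposreal _ Hp). intros t Ht. exact Ht. }
      destruct (Hs p) as [_ [_ [H1 [H2 _]]]]. apply Rabs_def2 in Hp'. lra.
  - intros del Hdel.
    destruct (archimed_cor1 del Hdel) as [N [HN HN0]].
    destruct (Hl (fun t => Rabs (t - l) < del) N) as [p [Hp Hp']].
    { exists (mkposreal _ Hdel). intros t Ht. exact Ht. }
    destruct (Hs p) as [E1 [E2 [E3 [E4 [E5 E6]]]]].
    assert (Hinv : / (INR p + 1) < del).
    { apply Rle_lt_trans with (/ INR N); [|exact HN].
      apply Rinv_le_contravar. apply lt_0_INR; lia.
      apply le_INR in Hp. lra. }
    exists (fst (fst (s p))), (snd (fst (s p))), (snd (s p)).
    repeat split; try lra; auto.
Qed.

Lemma limit_props g k a d : Hg g -> 0 < k -> in_closure (D_minus g k) a d -> in_H a d ->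
  exists A, a < A < 1 /\ d * A <= g A a /\ W g k a d A.
Proof.
  intros HG Hk Hcl [Ha Hd].
  assert (Hc : forall u b, 0 <= b <= 1 -> cont_in_strip g u b) by apply (proj1 (proj1 HG)).
  destruct (approx g k a d Hk Hcl) as [l [Hl Hap]].
  assert (L0 : a <= l).
  { destruct (Rle_lt_dec a l) as [h|h]; [exact h|exfalso].
    destruct (Hap ((a - l)/2) ltac:(lra)) as [a' [d' [A' [E1 [E2 [E3 [E4 [E5 _]]]]]]]].
    apply Rabs_def2 in E1. apply Rabs_def2 in E3. lra. }
  assert (L1 : d * l <= g l a).
  { destruct (Rle_lt_dec (d * l) (g l a)) as [h|h]; [exact h|exfalso].
    set (ga := d * l - g l a).
    destruct (Hc l a ltac:(lra) (ga/3) ltac:(unfold ga; lra)) as [d1 [Hd1 Hc1]].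
    set (del := Rmin (Rmin d1 (ga / (3 * (d + 2)))) 1).
    assert (Hdel1 : del <= d1) by (unfold del; apply Rle_trans with (Rmin d1 (ga / (3 * (d + 2)))); [apply Rmin_l|apply Rmin_l]).
    assert (Hdel2 : del <= ga / (3 * (d + 2))) by (unfold del; apply Rle_trans with (Rmin d1 (ga / (3 * (d + 2)))); [apply Rmin_l|apply Rmin_r]).
    assert (Hdel3 : del <= 1) by (unfold del; apply Rmin_r).
    assert (Hdel0 : 0 < del).
    { unfold del. apply Rmin_glb_lt; [apply Rmin_glb_lt|]; try lra.
      apply Rdiv_lt_0_compat; unfold ga; lra. }
    destruct (Hap del Hdel0) as [a' [d' [A' [E1 [E2 [E3 [E4 [E5 [E6 _]]]]]]]]].
    assert (G1 := Hc1 A' a' ltac:(lra) ltac:(lra) ltac:(lra)).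
    apply Rabs_def2 in G1. apply Rabs_def2 in E1. apply Rabs_def2 in E2. apply Rabs_def2 in E3.
    assert (Hm : del * (3 * (d + 2)) <= ga).
    { apply Rmult_le_reg_r with (/ (3 * (d+2))). apply Rinv_0_lt_compat; lra.
      rewrite Rmult_assoc, Rinv_r by lra. lra. }
    assert (P1 : d' * (A' - l) >= - (d + 1) * del) by nra.
    assert (P2 : (d' - d) * l >= - del) by nra.
    assert (d' * A' - d * l >= - (d + 2) * del) by nra.
    unfold ga in *. nra. }
  assert (L2 : W g k a d l).
  { intros v Hv. destruct (Req_dec v l) as [->|Hne].
    { rewrite Rminus_eq_0. lra. }
    destruct (Rge_dec (d * (k + 1) * (l - v) - g l a) (- g v a)) as [h|h]; [exact h|exfalso].
    set (ga := - g v a - (d * (k + 1) * (l - v) - g l a)).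
    assert (Hga : 0 < ga) by (unfold ga; lra).
    destruct (Hc l a ltac:(lra) (ga/4) ltac:(lra)) as [d1 [Hd1 Hc1]].
    destruct (Hc v a ltac:(lra) (ga/4) ltac:(lra)) as [d2 [Hd2 Hc2]].
    set (q := ga / (4 * (k + 1) * (d + 2))).
    assert (Hq : 0 < q) by (unfold q; apply Rdiv_lt_0_compat; nra).
    set (del := Rmin (Rmin (Rmin d1 d2) (Rmin (l - v) q)) 1).
    assert (Hdel0 : 0 < del).
    { unfold del. repeat apply Rmin_glb_lt; lra. }
    assert (Hdl : del <= d1 /\ del <= d2 /\ del <= l - v /\ del <= q /\ del <= 1).
    { unfold del.
      pose proof (Rmin_l (Rmin (Rmin d1 d2) (Rmin (l - v) q)) 1).
      pose proof (Rmin_r (Rmin (Rmin d1 d2) (Rmin (l - v) q)) 1).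
      pose proof (Rmin_l (Rmin d1 d2) (Rmin (l - v) q)).
      pose proof (Rmin_r (Rmin d1 d2) (Rmin (l - v) q)).
      pose proof (Rmin_l d1 d2). pose proof (Rmin_r d1 d2).
      pose proof (Rmin_l (l - v) q). pose proof (Rmin_r (l - v) q). lra. }
    destruct Hdl as [D1 [D2 [D3 [D4 D5]]]].
    destruct (Hap del Hdel0) as [a' [d' [A' [E1 [E2 [E3 [E4 [E5 [E6 E7]]]]]]]]].
    assert (G1 := Hc1 A' a' ltac:(lra) ltac:(lra) ltac:(lra)).
    assert (G2 := Hc2 v a' ltac:(lra) ltac:(rewrite Rminus_eq_0, Rabs_R0; lra) ltac:(lra)).
    apply Rabs_def2 in G1. apply Rabs_def2 in G2.
    apply Rabs_def2 in E1. apply Rabs_def2 in E2. apply Rabs_def2 in E3.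
    assert (Hv' : 0 <= v <= A') by lra.
    specialize (E7 v Hv').
    assert (Hm : del * (4 * (k + 1) * (d + 2)) <= ga).
    { apply Rmult_le_reg_r with (/ (4 * (k + 1) * (d+2))). apply Rinv_0_lt_compat; nra.
      rewrite Rmult_assoc, Rinv_r by nra. unfold q in D4. lra. }
    assert (P1 : (d' - d) * (A' - v) <= del) by nra.
    assert (P2 : d * (A' - l) <= d * del) by nra.
    assert (P3 : d' * (A' - v) - d * (l - v) <= (1 + d) * del) by nra.
    assert (P4 : (k + 1) * (d' * (A' - v) - d * (l - v)) <= (k + 1) * ((1 + d) * del)).
    { apply Rmult_le_compat_l; lra. }
    assert (P5 : (k + 1) * ((1 + d) * del) <= ga / 4) by nra.
    unfold ga in *. nra.
  }
  exists l. split; [|split; auto].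
  destruct HG as [_ HH]. destruct (HH a Ha) as [_ [Eaa [E1a _]]].
  split.
  - destruct (Req_dec a l) as [<-|]; [|lra]. rewrite Eaa in L1. nra.
  - destruct (Req_dec l 1) as [->|]; [|lra]. rewrite E1a in L1. nra.
Qed.

Lemma cont_lin g b c z : Hg g -> 0 <= b <= 1 -> continuity_pt (fun y => g y b - c * y) z.
Proof.
  intros HG Hb. apply continuity_pt_minus. apply contv; auto.
  apply continuity_pt_mult. apply continuity_pt_const. intros x y; auto.
  apply derivable_continuous_pt, derivable_pt_id.
Qed.

Theorem lemma5p4 (g : R -> R -> R) (k : R) :
  Hg g -> Hg1 g -> 0 < k ->
  forall a d, in_closure (D_minus g k) a d -> in_H a d ->
  forall a_low, 0 < a_low < a -> D_minus g k a_low d.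
Proof.
  intros HG H1 Hk a d Hcl HaH a_low Hal.
  destruct (limit_props g k a d HG Hk Hcl HaH) as [A [HA [HdA HW]]].
  destruct HaH as [Ha Hd].
  pose proof HG as [HC HH].
  destruct (HH a_low ltac:(lra)) as [_ [_ [E1l _]]].
  assert (Hgl : g A a < g A a_low) by (apply mono_strict; auto; lra).
  set (mu0 := (g A a_low - g A a) / 2).
  assert (Hmu0 : 0 < mu0) by (unfold mu0; lra).
  destruct (first_zero (fun y => g y a_low - (d + mu0) * y) A 1) as [B [HB [HfB HfB']]].
  { lra. } { intros; apply cont_lin; auto; lra. }
  { simpl. unfold mu0 in *. nra. } { simpl. rewrite E1l. lra. }
  simpl in HfB, HfB'.
  set (mu := Rmin mu0 (d * k * (B - A) / (4 * B))).
  assert (Hmu1 : mu <= mu0) by apply Rmin_l.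
  assert (Hmu2 : mu <= d * k * (B - A) / (4 * B)) by apply Rmin_r.
  assert (Hmu : 0 < mu).
  { apply Rmin_glb_lt; auto. apply Rdiv_lt_0_compat; [|lra].
    apply Rmult_lt_0_compat; [nra|lra]. }
  assert (Hmu3 : 4 * B * mu <= d * k * (B - A)).
  { apply Rmult_le_reg_r with (/ (4 * B)). apply Rinv_0_lt_compat; lra.
    replace (4 * B * mu * / (4 * B)) with mu by (field; lra). exact Hmu2. }
  destruct (first_zero (fun y => g y a_low - (d + mu) * y) A 1) as [A1 [HA1 [HfA1 HfA1']]].
  { lra. } { intros; apply cont_lin; auto; lra. }
  { simpl. assert (0 < g A a_low - (d + mu0) * A) by (apply HfB'; lra). nra. }
  { simpl. rewrite E1l. lra. }
  simpl in HfA1, HfA1'.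
  assert (HBA1 : B <= A1).
  { destruct (Rle_lt_dec B A1) as [h|h]; [exact h|exfalso].
    assert (0 < g A1 a_low - (d + mu0) * A1) by (apply HfB'; lra). nra. }
  set (e := d * (k + 1) - mu).
  assert (Hmuk : mu < d * k).
  { assert (4 * B * mu < 4 * B * (d * k)); [|nra].
    apply Rle_lt_trans with (1 := Hmu3).
    assert (0 < d * k) by nra. rewrite (Rmult_comm (4 * B)). apply Rmult_lt_compat_l; lra. }
  destruct (continuity_ab_min (fun y => g y a_low - e * y) 0 A1) as [As [HAs HAs']].
  { lra. } { intros; apply cont_lin; auto; lra. }
  simpl in HAs.
  assert (HAsA : A < As).
  { destruct (Rle_lt_dec As A) as [h|h]; [exfalso|exact h].
    specialize (HAs A1 ltac:(lra)).
    assert (M : g As a <= g As a_low) by (apply mono; auto; lra).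
    specialize (HW As ltac:(lra)).
    assert (Lb : - d * k * A + mu * As <= g As a_low - e * As) by (unfold e; nra).
    assert (Q : d * k * (A1 - A) <= 2 * mu * A1) by (unfold e in HAs; nra).
    assert (Q2 : 2 * B * (d * k * (A1 - A)) <= d * k * (B - A) * A1) by nra.
    assert (Q3 : 2 * B * (A1 - A) <= (B - A) * A1).
    { apply Rmult_le_reg_l with (d * k). nra. nra. }
    nra. }
  assert (Hgs : (d + mu) * As <= g As a_low).
  { destruct (Req_dec As A1) as [->|hne]; [lra|].
    assert (0 < g As a_low - (d + mu) * As) by (apply HfA1'; lra). lra. }
  split; [split; lra|].
  exists As. split; [lra|]. split.
  - apply Rbar_le_lt_trans with (Finite (e / (k + 1))).
    + apply glb_le. split.
      * apply Rdiv_lt_0_compat; unfold e; lra.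
      * intros v Hv. replace (e / (k + 1) * (k + 1)) with e by (field; lra).
        specialize (HAs v ltac:(lra)). simpl in HAs. lra.
    + simpl. apply Rlt_div_l; [lra|]. unfold e. lra.
  - apply Rlt_div_r; [lra|]. nra.
Qed.
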